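(* Let $\Upsilon$ be a tree and let $\|\cdot\|$ be an equivalent norm on $C_0(\Upsilon)$ with the Kadec property. Then the associated function $\mu:\Upsilon\to\mathbb{R}$, $\mu(t)=\inf\{\|\mathbf{1}_{(0,t]}+f'\|: f'\in C_0(\Upsilon),\ \operatorname{supp}f'\subseteq(t,\infty)\}$, has no bad points.
   Context: A tree is a partially ordered set $(\Upsilon,\preceq)$ such that for each $t$ the set $(0,t]=\{s:s\preceq t\}$ is well-ordered; write $(0,t)=\{s:s\prec t\}$, $(t,\infty)=\{u:t\prec u\}$, and let $r(t)$ be the order type of $(0,t)$. Trees are assumed Hausdorff: if $r(t)$ is a limit ordinal and $(0,t)=(0,t')$ then $t=t'$. $\Upsilon$ carries the coarsest topology in which every $(0,t]$ is open and closed, and $C_0(\Upsilon)$ is the space of continuous $f:\Upsilon\to\mathbb{R}$ with $\{|f|\ge\epsilon\}$ compact for every $\epsilon>0$, with the supremum norm; $\mathbf{1}_{(0,t]}$ is the indicator function and $\operatorname{supp}f=\{s:f(s)\ne0\}$. The set $t^+$ of immediate successors of $t$ consists of those $u$ with $(0,u)=(0,t]$. The function $\mu$ is increasing. For an increasing $\rho$, $t$ is good for $\rho$ if there is a finite $F\subseteq t^+$ with $\inf_{u\in t^+\setminus F}\rho(u)>\rho(t)$ (infimum over the empty set $=+\infty$); otherwise bad. A norm has the Kadec property if the weak and norm topologies coincide on its unit sphere. *)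

(* Defs.v *)
From Stdlib Require Lists.List.
From HB Require Import structures.
From mathcomp Require Import all_boot all_order all_algebra.
From mathcomp Require Import all_classical all_reals.
From mathcomp Require Import ereal topology normedtype numfun.
Set Implicit Arguments. Unset Strict Implicit. Unset Printing Implicit Defensive.
Import Order.TTheory GRing.Theory Num.Theory.
Import numFieldNormedType.Exports.
Local Open Scope classical_set_scope.
Local Open Scope ring_scope.

Section TreeDefs.
Variable T : Type.
Variable le : T -> T -> Prop.

Definition tlt (s t : T) : Prop := le s t /\ s <> t.

Definition down (t : T) : set T := [set s | le s t].

(* "r(t) is a (nonzero) limit ordinal": (0,t) is nonempty and has no largest element *)
Definition limit_point (t : T) : Prop :=
  (exists s, tlt s t) /\ (forall s, tlt s t -> exists s', tlt s s' /\ tlt s' t).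

Definition is_tree : Prop :=
  [/\ (forall t, le t t),
      (forall s t, le s t -> le t s -> s = t),
      (forall r s t, le r s -> le s t -> le r t),
      (forall (t : T) (A : set T), A `<=` down t -> A !=set0 ->
          exists m, A m /\ forall a, A a -> le m a)
    & (forall t t', limit_point t -> (forall s, tlt s t <-> tlt s t') -> t = t')].

Definition tree_subbasic (A : set T) : Prop :=
  exists t, A = down t \/ A = ~` down t.

(* open sets of the coarsest topology making every (0,t] clopen *)
Definition tree_open (U : set T) : Prop :=
  forall x, U x -> exists l : seq (set T),
    [/\ Stdlib.Lists.List.Forall tree_subbasic l,
        (forall A, Stdlib.Lists.List.In A l -> A x)
      & (forall y, (forall A, Stdlib.Lists.List.In A l -> A y) -> U y)].

Definition tree_compact (K : set T) : Prop :=
  forall C : set (set T), (forall U, C U -> tree_open U) ->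
    K `<=` \bigcup_(U in C) U ->
    exists F : seq (set T), (forall U, Stdlib.Lists.List.In U F -> C U) /\
      K `<=` [set x | exists U, Stdlib.Lists.List.In U F /\ U x].

Variable R : realType.

Definition tree_continuous (f : T -> R) : Prop :=
  forall V : set R, open V -> tree_open (f @^-1` V).

Definition C0 (f : T -> R) : Prop :=
  tree_continuous f /\ forall e : R, 0 < e -> tree_compact [set x | e <= `|f x|].

Definition supnorm (f : T -> R) : R := sup (range (fun x => `|f x|)).

Definition equiv_norm (N : (T -> R) -> R) : Prop :=
  [/\ (forall f, C0 f -> 0 <= N f),
      (forall f, C0 f -> N f = 0 -> forall x, f x = 0),
      (forall (a : R) f, C0 f -> N (fun x => a * f x) = `|a| * N f),
      (forall f g, C0 f -> C0 g -> N (fun x => f x + g x) <= N f + N g)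
    & (exists c C : R, [/\ 0 < c, 0 < C &
         forall f, C0 f -> c * supnorm f <= N f /\ N f <= C * supnorm f])].

Definition cont_lin_functional (N : (T -> R) -> R) (phi : (T -> R) -> R) : Prop :=
  (forall (a b : R) f g, C0 f -> C0 g ->
     phi (fun x => a * f x + b * g x) = a * phi f + b * phi g) /\
  (exists M : R, forall f, C0 f -> `|phi f| <= M * N f).

(* weakly open subsets of C_0(Upsilon) (values outside C_0 are irrelevant) *)
Definition weak_open (N : (T -> R) -> R) (U : set (T -> R)) : Prop :=
  forall f, C0 f -> U f -> exists (l : seq ((T -> R) -> R)) (d : R),
    [/\ 0 < d, Stdlib.Lists.List.Forall (cont_lin_functional N) l &
      forall g, C0 g -> (forall phi, Stdlib.Lists.List.In phi l -> `|phi g - phi f| < d) -> U g].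

Definition norm_open (N : (T -> R) -> R) (U : set (T -> R)) : Prop :=
  forall f, C0 f -> U f -> exists d : R, 0 < d /\
    forall g, C0 g -> N (fun x => g x - f x) < d -> U g.

Definition unit_sphere (N : (T -> R) -> R) : set (T -> R) :=
  [set f | C0 f /\ N f = 1].

Definition kadec (N : (T -> R) -> R) : Prop :=
  forall A : set (T -> R),
    (exists U, weak_open N U /\ A = U `&` unit_sphere N) <->
    (exists V, norm_open N V /\ A = V `&` unit_sphere N).

Definition mu (N : (T -> R) -> R) (t : T) : R :=
  inf [set N (fun s => \1_(down t) s + f s) | f in
        [set f | C0 f /\ forall s, f s <> 0 -> tlt t s]].

Definition succs (t : T) : set T := [set u | forall s, tlt s u <-> le s t].

(* t is good for rho (inf over the empty set = +oo) *)
Definition good (rho : T -> R) (t : T) : Prop :=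
  exists F : set T, [/\ finite_set F, F `<=` succs t &
    ((rho t)%:E < ereal_inf [set (rho u)%:E | u in succs t `\` F])%E].

Definition bad (rho : T -> R) (t : T) : Prop := ~ good rho t.

End TreeDefs.

(* Main.v *)
Require Import Defs.
From mathcomp Require Import all_boot all_order all_algebra.
From mathcomp Require Import all_classical all_reals.
From mathcomp Require Import ereal topology normedtype numfun.
From Stdlib Require Import Classical.
From mathcomp Require Import ring lra.
Set Implicit Arguments. Unset Strict Implicit. Unset Printing Implicit Defensive.
Import Order.TTheory GRing.Theory Num.Theory.
Import numFieldNormedType.Exports.
Local Open Scope classical_set_scope.
Local Open Scope ring_scope.
From Stdlib Require Lists.List.
Notation In := List.In.
Notation Forall := List.Forall.
Notation Forall_inv := List.Forall_inv.
Notation Forall_inv_tail := List.Forall_inv_tail.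
Section Tree.
Variable T : Type.
Variable le : T -> T -> Prop.
Hypothesis Ht : is_tree le.
Local Notation dn := (Defs.down le).
Local Notation tl := (tlt le).

Lemma lrefl x : le x x. Proof. by case: Ht => h _ _ _ _; apply: h. Qed.
Lemma lanti x y : le x y -> le y x -> x = y. Proof. by case: Ht => _ h _ _ _; apply: h. Qed.
Lemma ltrans x y z : le x y -> le y z -> le x z. Proof. by case: Ht => _ _ h _ _; apply: h. Qed.
Lemma wo x (A : set T) : A `<=` dn x -> A !=set0 -> exists m, A m /\ forall a, A a -> le m a.
Proof. by case: Ht => _ _ _ h _; apply: h. Qed.
Lemma haus x y : Defs.limit_point le x -> (forall s, tl s x <-> tl s y) -> x = y.
Proof. by case: Ht => _ _ _ _ h; apply: h. Qed.

Lemma comp x a b : le a x -> le b x -> le a b \/ le b a.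
Proof.
move=> ha hb.
have [m [Am Hm]] : exists m, (m = a \/ m = b) /\ forall c, (c = a \/ c = b) -> le m c.
  apply: (@wo x [set z | z = a \/ z = b]); last by exists a; left.
  by move=> z /= [->|->].
case: Am => Em; rewrite Em in Hm; [left|right]; apply: Hm; by [right|left].
Qed.

Definition opt_ok (s0 : T) (o : option T) :=
  match o with None => True | Some s => tl s s0 end.
Definition opt_out (o : option T) (r : T) :=
  match o with None => True | Some s => ~ le r s end.

Lemma single_sub s0 (A : set T) : tree_subbasic le A -> A s0 ->
  exists o, opt_ok s0 o /\ forall r, le r s0 -> opt_out o r -> A r.
Proof.
move=> [b [->|->]] As0.
  by exists None; split => // r hr _; apply: (ltrans hr As0).
have [m0 [[Dm0 Dm0'] Hm]] : exists m, (le m s0 /\ ~ le m b) /\ forall c, (le c s0 /\ ~ le c b) -> le m c.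
  apply: (@wo s0 [set r | le r s0 /\ ~ le r b]); first by move=> r [].
  by exists s0; split => //; apply: lrefl.
case: (classic (m0 = s0)) => [Em0|Nm0]; last first.
  exists (Some m0); split; first by split.
  move=> r hr /= hn hrb.
  case: (comp hr Dm0) => // h; apply: Dm0'; exact: (ltrans h hrb).
have below : forall r, tl r s0 -> le r b.
  move=> r [hr1 hr2]; apply: NNPP => hn; apply: hr2; apply: (lanti hr1).
  by rewrite -Em0; apply: Hm; split.
case: (classic (exists p, tl p s0 /\ forall r, tl r s0 -> le r p)) => [[p [hp1 hp2]]|Nmax].
  exists (Some p); split => // r hr /= hn hrb.
  case: (classic (r = s0)) => [Er|Nr]; first by apply: As0; rewrite -Er.
  by apply: hn; apply: hp2.
case: (classic (exists r, tl r s0)) => [Ex|Nex]; last first.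
  exists None; split => // r hr _ hrb.
  case: (classic (r = s0)) => [Er|Nr]; first by apply: As0; rewrite -Er.
  by apply: Nex; exists r.
have lim : Defs.limit_point le s0.
  split => // s hs; apply: NNPP => hn; apply: Nmax; exists s; split => // r hr.
  case: (comp (proj1 hr) (proj1 hs)) => // h.
  case: (classic (s = r)) => [->|Nsr]; first exact: lrefl.
  by exfalso; apply: hn; exists r.
have Eb : ~ tl b s0.
  by move=> hb; apply: Nmax; exists b; split.
have [t' [[Et1 Et2] Ht']] : exists m, (le m b /\ ~ tl m s0) /\ forall c, (le c b /\ ~ tl c s0) -> le m c.
  apply: (@wo b [set r | le r b /\ ~ tl r s0]); first by move=> r [].
  by exists b; split => //; apply: lrefl.
have := @haus s0 t' lim.
have eqv : forall s, tl s s0 <-> tl s t'.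
  move=> s; split => hs.
  - have sb := below _ hs.
    case: (comp sb Et1) => h.
      split => // Est; apply: Et2; by rewrite -Est.
    case: (classic (t' = s0)) => [Ets|Nts].
      by exfalso; case: hs => hs1 hs2; apply: hs2; apply: (lanti hs1); rewrite -Ets.
    by exfalso; apply: Et2; split => //; apply: (ltrans h (proj1 hs)).
  - have sb : le s b by apply: (ltrans (proj1 hs) Et1).
    apply: NNPP => hn; case: hs => hs1 hs2; apply: hs2; apply: (lanti hs1).
    by apply: Ht'; split.
move=> /(_ eqv) Es; exfalso; apply: As0; by rewrite Es.
Qed.

Lemma list_sub s0 (l : seq (set T)) : Forall (tree_subbasic le) l ->
  (forall A, In A l -> A s0) ->
  exists o, opt_ok s0 o /\ forall r, le r s0 -> opt_out o r -> forall A, In A l -> A r.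
Proof.
elim: l => [|A l IH] Hf Hin.
  by exists None; split => // r _ _ A [].
have HA := Forall_inv Hf; have Hl := Forall_inv_tail Hf.
have [o1 [ok1 H1]] := IH Hl (fun B hB => Hin B (or_intror hB)).
have [o2 [ok2 H2]] := single_sub HA (Hin A (or_introl erefl)).
have key : forall o, opt_ok s0 o -> (forall r, opt_out o r -> opt_out o1 r) ->
     (forall r, opt_out o r -> opt_out o2 r) ->
     exists o, opt_ok s0 o /\ forall r, le r s0 -> opt_out o r -> forall B, In B (A :: l) -> B r.
  move=> o ok h1 h2; exists o; split => // r hr ho B [<-|hB].
    by apply: H2 => //; apply: h2.
  by apply: H1 => //; apply: h1.
case: o1 key ok1 H1 => [a|] key ok1 H1; case: o2 key ok2 H2 => [b|] key ok2 H2.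
- case: (comp (proj1 ok1) (proj1 ok2)) => hab.
    apply: (key (Some b)) => // r /= hr // hra.
    by apply: hr; apply: (ltrans hra hab).
  apply: (key (Some a)) => // r /= hr // hrb.
  by apply: hr; apply: (ltrans hrb hab).
- by apply: (key (Some a)).
- by apply: (key (Some b)).
- by apply: (key None).
Qed.

Definition covered (C : set (set T)) (K : set T) :=
  exists F : seq (set T), (forall U, In U F -> C U) /\
    K `<=` [set x | exists U, In U F /\ U x].

Lemma compact_down t : tree_compact le (dn t).
Proof.
move=> C HC Hcov; apply: NNPP => Hn.
have [s0 [[s0t Ns0] Hm]] : exists m, (le m t /\ ~ covered C (dn m)) /\
    forall c, (le c t /\ ~ covered C (dn c)) -> le m c.
  apply: (@wo t [set r | le r t /\ ~ covered C (dn r)]); first by move=> r [].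
  by exists t; split => //; apply: lrefl.
have [U CU Us0] := Hcov s0 s0t.
have [l [Hf Hin Hsub]] := HC U CU s0 Us0.
have [[s'|] [ok Ho]] := list_sub Hf Hin.
- have : covered C (dn s').
    apply: NNPP => hc.
    have h := Hm s' (conj (ltrans (proj1 ok) s0t) hc).
    by case: ok => ok1 ok2; apply: ok2; apply: (lanti ok1 h).
  move=> [F [HF1 HF2]]; apply: Ns0; exists (U :: F); split.
    by move=> V [<-|hV] //; apply: HF1.
  move=> r hr; case: (classic (le r s')) => hrs.
    by have [V [hV Vr]] := HF2 r hrs; exists V; split => //; right.
  by exists U; split; [left|apply: Hsub; apply: Ho].
- apply: Ns0; exists [:: U]; split; first by move=> V [<-|[]].
  by move=> r hr; exists U; split; [left|apply: Hsub; apply: Ho].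
Qed.
End Tree.
Section Top.
Variable T : Type.
Variable le : T -> T -> Prop.
Variable R : realType.
Local Notation dn := (Defs.down le).

Definition nbhd_ok (f : T -> R) x e := exists l, Forall (tree_subbasic le) l /\
  (forall A, In A l -> A x) /\ forall y, (forall A, In A l -> A y) -> `|f y - f x| < e.

Lemma cont_from (f : T -> R) : (forall x e, 0 < e -> nbhd_ok f x e) -> tree_continuous le f.
Proof.
move=> H V oV x Vfx.
have : nbhs (f x) V by apply: open_nbhs_nbhs; split.
move=> /nbhs_ballP [e e0 sub].
have [l [h1 [h2 h3]]] := H x e e0.
exists l; split => // y hy; apply: sub.
by rewrite -ball_normE /= distrC; apply: h3.
Qed.

Lemma cont_to (f : T -> R) : tree_continuous le f -> forall x e, 0 < e -> nbhd_ok f x e.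
Proof.
move=> Hf x e e0.
have [|l [h1 h2 h3]] := Hf (ball (f x) e) (ball_open _ _) x.
  by apply: ballxx.
exists l; split => //; split => // y hy.
have := h3 y hy; rewrite /= -ball_normE /= distrC; done.
Qed.

Lemma cont_cst (k : R) : tree_continuous le (fun _ => k).
Proof.
apply: cont_from => x e e0; exists nil; split => //; split => // y _.
by rewrite subrr normr0.
Qed.

Lemma nbhd_app x (l1 l2 : list (set T)) : Forall (tree_subbasic le) l1 ->
  Forall (tree_subbasic le) l2 -> (forall A, In A l1 -> A x) -> (forall A, In A l2 -> A x) ->
  [/\ Forall (tree_subbasic le) (List.app l1 l2), (forall A, In A (List.app l1 l2) -> A x) &
      forall y, (forall A, In A (List.app l1 l2) -> A y) ->
        (forall A, In A l1 -> A y) /\ (forall A, In A l2 -> A y)].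
Proof.
move=> f1 f2 i1 i2; split.
- by apply/List.Forall_app.
- by move=> A /List.in_app_iff [h|h]; [apply: i1|apply: i2].
- by move=> y hy; split => A hA; apply: hy; apply/List.in_app_iff; [left|right].
Qed.

Lemma cont_add (f g : T -> R) : tree_continuous le f -> tree_continuous le g ->
  tree_continuous le (fun x => f x + g x).
Proof.
move=> hf hg; apply: cont_from => x e e0.
have e20 : 0 < e / 2 by rewrite divr_gt0.
have [l1 [a1 [b1 c1]]] := cont_to hf x e20.
have [l2 [a2 [b2 c2]]] := cont_to hg x e20.
have [A1 B1 C1] := nbhd_app a1 a2 b1 b2.
exists (List.app l1 l2); split => //; split => // y hy.
have [y1 y2] := C1 y hy.
have := c1 y y1; have := c2 y y2.
have -> : f y + g y - (f x + g x) = (f y - f x) + (g y - g x) by ring.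
move=> h2 h1; apply: (le_lt_trans (ler_normD _ _)).
by rewrite (splitr e) ltrD.
Qed.

Lemma cont_scale (a : R) (f : T -> R) : tree_continuous le f ->
  tree_continuous le (fun x => a * f x).
Proof.
move=> hf; apply: cont_from => x e e0.
have ea0 : 0 < e / (`|a| + 1) by rewrite divr_gt0 // ltr_wpDl.
have [l [a1 [b1 c1]]] := cont_to hf x ea0.
exists l; split => //; split => // y hy.
rewrite -mulrBr normrM.
have h := c1 y hy.
apply: (le_lt_trans (y := (`|a| + 1) * `|f y - f x|)).
  by rewrite ler_wpM2r // lerDl.
by rewrite mulrC -ltr_pdivlMr ?ltr_wpDl.
Qed.

Lemma open_lt (h : T -> R) e : tree_continuous le h ->
  tree_open le (~` [set x | e <= `|h x|]).
Proof.
move=> hc x /= hx; have hx' : `|h x| < e by rewrite ltNge; apply/negP.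
have d0 : 0 < e - `|h x| by rewrite subr_gt0.
have [l [a1 [b1 c1]]] := cont_to hc x d0.
exists l; split => // y hy /=; apply/negP; rewrite -ltNge.
have H := ler_normD (h x) (h y - h x).
have E : h x + (h y - h x) = h y by ring.
rewrite E in H; have := c1 y hy; lra.
Qed.

Lemma compact_sub (K K' : set T) : tree_compact le K -> K' `<=` K ->
  tree_open le (~` K') -> tree_compact le K'.
Proof.
move=> hK sub hO C HC cov.
have HC' : forall U, (C `|` [set ~` K']) U -> tree_open le U.
  move=> U [CU|EU]; first exact: HC.
  by rewrite EU.
have cov' : K `<=` \bigcup_(U in C `|` [set ~` K']) U.
  move=> x Kx; case: (classic (K' x)) => h.
    by have [U CU Ux] := cov x h; exists U => //; left.
  by exists (~` K') => //; right.
have [F [HF1 HF2]] := hK _ HC' cov'.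
exists (List.filter (fun U => `[< C U >]) F); split.
  by move=> U /List.filter_In [_ h]; apply/asboolP.
move=> x hx; have [U [inU Ux]] := HF2 x (sub x hx).
exists U; split => //; apply/List.filter_In; split => //; apply/asboolP.
by case: (HF1 U inU) => // EU; rewrite EU in Ux.
Qed.

Lemma compact_U (K1 K2 : set T) : tree_compact le K1 -> tree_compact le K2 ->
  tree_compact le (K1 `|` K2).
Proof.
move=> h1 h2 C HC cov.
have [F1 [a1 b1]] := h1 C HC (fun x hx => cov x (or_introl hx)).
have [F2 [a2 b2]] := h2 C HC (fun x hx => cov x (or_intror hx)).
exists (List.app F1 F2); split.
  by move=> U /List.in_app_iff [h|h]; [apply: a1|apply: a2].
move=> x [hx|hx].
  by have [U [iU Ux]] := b1 x hx; exists U; split => //; apply/List.in_app_iff; left.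
by have [U [iU Ux]] := b2 x hx; exists U; split => //; apply/List.in_app_iff; right.
Qed.

Lemma C0_zero : C0 le (fun _ : T => 0 : R).
Proof.
split; first exact: cont_cst.
move=> e e0 C HC cov; exists nil; split => // x /=.
by rewrite normr0 => h; have := lt_le_trans e0 h; rewrite ltxx.
Qed.

Lemma C0_add (f g : T -> R) : C0 le f -> C0 le g -> C0 le (fun x => f x + g x).
Proof.
move=> [cf kf] [cg kg]; have cs := cont_add cf cg; split => // e e0.
have e20 : 0 < e / 2 by rewrite divr_gt0.
apply: (compact_sub (compact_U (kf _ e20) (kg _ e20))); last exact: open_lt.
move=> x /= hx; have H := ler_normD (f x) (g x).
case: (lerP (e / 2) `|f x|) => h1; first by left.
case: (lerP (e / 2) `|g x|) => h2; first by right.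
exfalso; lra.
Qed.

Lemma C0_scale (a : R) (f : T -> R) : C0 le f -> C0 le (fun x => a * f x).
Proof.
move=> [cf kf]; have cs := cont_scale (a:=a) cf; split => // e e0.
have a1 : 0 < `|a| + 1 by rewrite ltr_wpDl.
have ea0 : 0 < e / (`|a| + 1) by rewrite divr_gt0.
apply: (compact_sub (kf _ ea0)); last exact: open_lt.
move=> x /= hx; rewrite ler_pdivrMr //.
apply: (le_trans hx); rewrite normrM mulrC ler_wpM2l //.
by rewrite lerDl.
Qed.

Lemma C0_bounded (f : T -> R) : C0 le f -> exists M, forall x, `|f x| <= M.
Proof.
move=> [hc hk].
pose C := [set U | tree_open le U /\ exists M, forall x, U x -> `|f x| <= M].
have cov : [set x | 1 <= `|f x|] `<=` \bigcup_(U in C) U.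
  move=> x hx; exists (f @^-1` ball (f x) 1) => /=; last by apply: ballxx.
  split; first by apply: hc; apply: ball_open.
  exists (`|f x| + 1) => y; rewrite /= -ball_normE /= => h.
  have H := ler_normD (f x) (f y - f x).
  have E : f x + (f y - f x) = f y by ring.
  by rewrite E in H; rewrite distrC in h; lra.
have [F [HF1 HF2]] := hk 1 ltr01 C (fun U hU => proj1 hU) cov.
have [M HM] : exists M, forall U, In U F -> forall x, U x -> `|f x| <= M.
  elim: F HF1 {HF2} => [|U F IH] H; first by exists 0.
  have [_ [M1 hM1]] := H U (or_introl erefl).
  have [M2 hM2] := IH (fun V hV => H V (or_intror hV)).
  exists (Num.max M1 M2) => V [<-|hV] x hx; rewrite le_max; apply/orP.
    by left; apply: hM1.
  by right; apply: hM2 hV x hx.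
exists (Num.max M 1) => x; rewrite le_max; apply/orP.
case: (lerP 1 `|f x|) => h.
  by have [U [iU Ux]] := HF2 x h; left; apply: HM iU x Ux.
by right; apply: ltW.
Qed.

Hypothesis Ht : is_tree le.

Lemma indic1 t x : le x t -> \1_(dn t) x = 1 :> R.
Proof. by move=> h; rewrite indicE mem_set. Qed.
Lemma indic0 t x : ~ le x t -> \1_(dn t) x = 0 :> R.
Proof. by move=> h; rewrite indicE memNset. Qed.

Lemma C0_indic t : C0 le (fun x => \1_(dn t) x : R).
Proof.
have hc : tree_continuous le (fun x => \1_(dn t) x : R).
  apply: cont_from => x e e0; case: (classic (le x t)) => hx.
    exists [:: dn t]; split; first by constructor => //; exists t; left.
    split; first by move=> A [<-|[]].
    move=> y hy; have hyt : le y t by apply: (hy _ (or_introl erefl)).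
    by rewrite indic1 // indic1 // subrr normr0.
  exists [:: ~` dn t]; split; first by constructor => //; exists t; right.
  split; first by move=> A [<-|[]].
  move=> y hy; have hyt : ~ le y t by apply: (hy _ (or_introl erefl)).
  by rewrite indic0 // indic0 // subrr normr0.
split => // e e0.
apply: (compact_sub (compact_down (t:=t) Ht)); last exact: open_lt.
move=> x /= hx; apply: NNPP => hn; rewrite indic0 // normr0 in hx.
by have := lt_le_trans e0 hx; rewrite ltxx.
Qed.
End Top.
Section Sums.
Variable T : Type.
Variable le : T -> T -> Prop.
Variable R : realType.
Variable N : (T -> R) -> R.
Hypothesis Hn : equiv_norm le N.

Definition Qs (w : nat -> R) (p : nat -> T -> R) (idx : seq nat) :=
  fun s => \sum_(i <- idx) w i * p i s.

Lemma Qs_nil w p : Qs w p [::] = fun _ => 0.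
Proof. by apply: funext => s; rewrite /Qs big_nil. Qed.
Lemma Qs_cons w p i idx : Qs w p (i :: idx) = fun s => w i * p i s + Qs w p idx s.
Proof. by apply: funext => s; rewrite /Qs big_cons. Qed.

Lemma C0_Qs w p idx : (forall i, C0 le (p i)) -> C0 le (Qs w p idx).
Proof.
move=> hp; elim: idx => [|i idx IH]; first by rewrite Qs_nil; apply: C0_zero.
by rewrite Qs_cons; apply: C0_add => //; apply: C0_scale.
Qed.

Lemma N0 : N (fun _ => 0) = 0.
Proof.
case: Hn => _ _ hs _ _.
have := hs 0 _ (@C0_zero T le R); rewrite normr0 !mul0r.
by [].
Qed.

Lemma Nge0 f : C0 le f -> 0 <= N f.
Proof. by case: Hn => h _ _ _ _; apply: h. Qed.

Lemma Nscale (a : R) f : C0 le f -> N (fun x => a * f x) = `|a| * N f.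
Proof. by case: Hn => _ _ h _ _; apply: h. Qed.

Lemma Ntri f g : C0 le f -> C0 le g -> N (fun x => f x + g x) <= N f + N g.
Proof. by case: Hn => _ _ _ h _; apply: h. Qed.

Lemma N_Qs w p idx : (forall i, C0 le (p i)) ->
  N (Qs w p idx) <= \sum_(i <- idx) `|w i| * N (p i).
Proof.
move=> hp; elim: idx => [|i idx IH]; first by rewrite Qs_nil N0 big_nil.
rewrite Qs_cons big_cons.
apply: (le_trans (Ntri (C0_scale (w i) (hp i)) (C0_Qs w idx hp))).
by rewrite Nscale // lerD2l.
Qed.

Lemma lin_zero phi : cont_lin_functional le N phi -> phi (fun _ => 0) = 0.
Proof.
move=> [hl _]; have := hl 0 0 _ _ (@C0_zero T le R) (@C0_zero T le R).
by rewrite !mul0r addr0.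
Qed.

Lemma lin_Qs phi w p idx : cont_lin_functional le N phi -> (forall i, C0 le (p i)) ->
  phi (Qs w p idx) = \sum_(i <- idx) w i * phi (p i).
Proof.
move=> hphi hp; elim: idx => [|i idx IH]; first by rewrite Qs_nil big_nil lin_zero.
rewrite Qs_cons big_cons -IH.
have -> : (fun s => w i * p i s + Qs w p idx s) = (fun s => w i * p i s + 1 * Qs w p idx s).
  by apply: funext => s; rewrite mul1r.
by case: hphi => hl _; rewrite hl ?mul1r //; apply: C0_Qs.
Qed.

Lemma Qs_pt w p idx r B : uniq idx ->
  (forall i j s, i != j -> p i s != 0 -> p j s != 0 -> False) ->
  (forall i, `|w i| <= r) -> (forall i s, `|p i s| <= B) -> 0 <= r -> 0 <= B ->
  forall s, `|Qs w p idx s| <= r * B.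
Proof.
move=> hu hd hw hb r0 B0 s.
suff : `|Qs w p idx s| <= r * B /\ (Qs w p idx s != 0 -> exists2 i, i \in idx & p i s != 0).
  by case.
elim: idx hu => [|i idx IH] /=.
  by rewrite Qs_nil normr0 eqxx; split => //; apply: mulr_ge0.
move=> /andP [ni hu]; have [IH1 IH2] := IH hu.
rewrite Qs_cons /=.
have [pz|pnz] := eqVneq (p i s) 0.
  rewrite pz mulr0 add0r; split => // /IH2 [j hj pj]; exists j => //.
  by rewrite inE hj orbT.
have Qz : Qs w p idx s = 0.
  apply/eqP; apply: contraT => /IH2 [j hj pj].
  by exfalso; apply: (hd i j s) => //; apply: contraNneq ni => ->.
rewrite Qz addr0; split; last by move=> _; exists i => //; rewrite inE eqxx.
by rewrite normrM; apply: ler_pM => //; apply: hb.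
Qed.

Lemma supnorm_le (f : T -> R) B : (exists x : T, True) -> (forall x, `|f x| <= B) -> supnorm f <= B.
Proof.
move=> [x0 _] hb; apply: ge_sup; first by exists `|f x0|, x0.
by move=> _ [x _ <-]; apply: hb.
Qed.

Lemma supnorm_ge (f : T -> R) x : C0 le f -> `|f x| <= supnorm f.
Proof.
move=> /C0_bounded [M hM]; apply: ub_le_sup; last by exists x.
by exists M => _ [y _ <-]; apply: hM.
Qed.
End Sums.
Fixpoint pre (A : Type) (u : nat -> A) (n : nat) : list A :=
  if n is k.+1 then u k :: pre u k else nil.

Lemma pre_in (A : Type) (u : nat -> A) i n : (i < n)%N -> In (u i) (pre u n).
Proof.
elim: n => [|n IH] //= hi.
rewrite ltnS leq_eqVlt in hi; case/orP: hi => [/eqP ->|h]; first by left.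
by right; apply: IH.
Qed.

Lemma build (A : Type) (P : nat -> list A -> A -> Prop) :
  (forall n s, exists a, P n s a) -> exists u : nat -> A, forall n, P n (pre u n) (u n).
Proof.
move=> H.
pose g n s := proj1_sig (cid (H n s)).
have hg : forall n s, P n s (g n s) by move=> n s; rewrite /g; case: cid.
pose fix pr n : list A := if n is k.+1 then g k (pr k) :: pr k else nil.
exists (fun n => g n (pr n)) => n.
suff -> : pre (fun n => g n (pr n)) n = pr n by apply: hg.
by elim: n => [|n IH] //=; rewrite IH.
Qed.

Lemma finite_list (A : Type) (s : list A) : finite_set [set x | In x s].
Proof.
elim: s => [|a s IH].
  by apply: (sub_finite_set _ (finite_set0 A)) => x [].
apply: (sub_finite_set (B := [set a] `|` [set x | In x s])).
  by move=> x [->|h]; [left|right].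
by rewrite finite_setU; split => //; apply: finite_set1.
Qed.

Lemma in_sum_le (A : Type) (R : realType) (F : A -> R) (l : list A) x :
  (forall y, 0 <= F y) -> In x l -> F x <= \sum_(y <- l) F y.
Proof.
move=> h0; elim: l => [|a l IH] // [<-|hx]; rewrite big_cons.
  by rewrite lerDl sumr_ge0.
by apply: (le_trans (IH hx)); rewrite lerDr.
Qed.

Section Lin.
Variable T : Type.
Variable le : T -> T -> Prop.
Variable R : realType.
Variable N : (T -> R) -> R.

Lemma C0_sub (f g : T -> R) : C0 le f -> C0 le g -> C0 le (fun s => f s - g s).
Proof.
move=> hf hg.
have -> : (fun s => f s - g s) = (fun s => f s + (-1) * g s).
  by apply: funext => s; rewrite mulN1r.
by apply: C0_add => //; apply: C0_scale.
Qed.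

Lemma lin_scale phi k (f : T -> R) : cont_lin_functional le N phi -> C0 le f ->
  phi (fun s => k * f s) = k * phi f.
Proof.
move=> [hl _] hf; have := hl k 0 f f hf hf.
have -> : (fun x => k * f x + 0 * f x) = (fun x => k * f x).
  by apply: funext => x; rewrite mul0r addr0.
by rewrite mul0r addr0.
Qed.

Lemma lin_add phi (f g : T -> R) : cont_lin_functional le N phi -> C0 le f -> C0 le g ->
  phi (fun s => f s + g s) = phi f + phi g.
Proof.
move=> [hl _] hf hg; have := hl 1 1 f g hf hg.
have -> : (fun x => 1 * f x + 1 * g x) = (fun x => f x + g x).
  by apply: funext => x; rewrite !mul1r.
by rewrite !mul1r.
Qed.

Hypothesis Ht : is_tree le.
Hypothesis Hn : equiv_norm le N.
Local Notation dn := (Defs.down le).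

Lemma mu_lb t (f : T -> R) : C0 le f -> (forall s, f s <> 0 -> tlt le t s) ->
  mu le N t <= N (fun s => \1_(dn t) s + f s).
Proof.
move=> hf hs; rewrite /mu; apply: ge_inf; last by exists f.
exists 0 => _ [g [hg _] <-]; apply: (Nge0 Hn); apply: C0_add => //.
exact: C0_indic.
Qed.

Lemma mu_approx u (e : R) : 0 < e -> exists h : T -> R, [/\ C0 le h,
  (forall s, h s <> 0 -> tlt le u s) & N (fun s => \1_(dn u) s + h s) < mu le N u + e].
Proof.
move=> e0; rewrite /mu.
set S := [set N _ | f in _].
have ne : S !=set0.
  exists (N (fun s => \1_(dn u) s + 0)), (fun _ => 0); split => //.
  exact: C0_zero.
have hl : inf S < inf S + e by rewrite ltrDl.
have [_ [g [hg1 hg2] <-] hlt] := inf_lt ne hl.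
by exists g; split.
Qed.
End Lin.
Unset Implicit Arguments.
Theorem proposition3p2 (R : realType) (T : Type) (le : T -> T -> Prop)
    (N : (T -> R) -> R) :
  is_tree le -> equiv_norm le N -> kadec le N ->
  forall t : T, ~ bad le (mu le N) t.
Proof.
move=> Ht Hn Hk t Hbad.
set m := mu le N t.
have [cc [CC [cc0 CC0 hcC]]] : exists cc CC : R, [/\ 0 < cc, 0 < CC &
         forall f, C0 le f -> cc * supnorm f <= N f /\ N f <= CC * supnorm f].
  by case: Hn.
have refl := @lrefl T le Ht.
pose y := fun s => \1_(Defs.down le t) s : R.
have Cy : C0 le y := C0_indic R Ht t.
have step : forall (n : nat) (s : list (T * (T -> R))), exists a : T * (T -> R),
   [/\ ~ In a.1 (List.map fst s), succs le t a.1, C0 le a.2,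
       (forall x, a.2 x <> 0 -> tlt le a.1 x)
     & N (fun x => \1_(Defs.down le a.1) x + a.2 x) < m + (n.+1%:R)^-1].
  move=> n s; set e := (n.+1%:R)^-1 : R.
  have e0 : 0 < e by rewrite invr_gt0 ltr0n.
  pose F := [set x | In x (List.map fst s) /\ succs le t x].
  have fF : finite_set F := sub_finite_set (fun x hx => proj1 hx) (finite_list _).
  have sF : F `<=` succs le t by move=> x [].
  have hinf : (ereal_inf [set (mu le N u)%:E | u in succs le t `\` F] <= m%:E)%E.
    by rewrite leNgt; apply/negP => h; apply: Hbad; exists F; split.
  have e20 : 0 < e / 2 by rewrite divr_gt0.
  have : (ereal_inf [set (mu le N u)%:E | u in succs le t `\` F] < (m + e / 2)%:E)%E.
    by apply: (le_lt_trans hinf); rewrite lte_fin ltrDl.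
  case/ereal_inf_lt => _ [u [su nFu] <-]; rewrite lte_fin => hu.
  have [h [Ch sh Nh]] := mu_approx le N u e20.
  exists (u, h); split => //=.
    by move=> hin; apply: nFu; split.
  have -> : m + e = m + e / 2 + e / 2 by rewrite -addrA -splitr.
  by apply: (lt_le_trans Nh); rewrite lerD2r ltW.
have [U HU] := build step.
pose u n := (U n).1; pose h n := (U n).2.
have dist0 : forall i j, (i < j)%N -> u i <> u j.
  move=> i j hij E; have [hn _ _ _ _] := HU j; apply: hn.
  rewrite -/(u j) -E; apply: (List.in_map fst); exact: pre_in.
have dist : forall i j, i != j -> u i <> u j.
  move=> i j; case: (ltngtP i j) => // hij _; first exact: dist0.
  by move=> E; apply: (dist0 j i hij); rewrite E.
have succ : forall n, succs le t (u n) by move=> n; case: (HU n).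
have tu : forall n, tlt le t (u n) by move=> n; apply/(succ n); apply: refl.
have Ch : forall n, C0 le (h n) by move=> n; case: (HU n).
have sh : forall n x, h n x <> 0 -> tlt le (u n) x by move=> n; case: (HU n).
pose z n := fun s => \1_(Defs.down le (u n)) s + h n s.
have Nz : forall n, N (z n) < m + (n.+1%:R)^-1 by move=> n; case: (HU n).
have Cz : forall n, C0 le (z n) by move=> n; apply: C0_add => //; apply: C0_indic.
pose p n := fun s => z n s - y s.
have Cp : forall n, C0 le (p n) by move=> n; apply: C0_sub.
have zyp : forall n, z n = fun s => y s + p n s.
  by move=> n; apply: funext => s; rewrite /p; ring.
have supp : forall n s, p n s != 0 -> le (u n) s.
  move=> n s; apply: contraNP => hn; apply/eqP.
  have h0 : h n s = 0.
    by apply: NNPP => hh; apply: hn; exact: (proj1 (sh n s hh)).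
  rewrite /p /z /y h0 addr0.
  case: (classic (le s (u n))) => hsu; case: (classic (le s t)) => hst.
  - by rewrite !indic1 // subrr.
  - exfalso; case: (classic (s = u n)) => [Es|Ns].
      by apply: hn; rewrite Es; apply: refl.
    by apply: hst; apply/(succ n).
  - by exfalso; apply: hsu; apply: (ltrans Ht hst (proj1 (tu n))).
  - by rewrite !indic0 // subrr.
have disj : forall i j s, i != j -> p i s != 0 -> p j s != 0 -> False.
  move=> i j s ij /supp hi /supp hj.
  have key : forall a b, a != b -> le (u a) (u b) -> False.
    move=> a b ab hab.
    have : tlt le (u a) (u b) by split => //; apply: dist.
    move/(succ b) => hat; case: (tu a) => h1 h2; apply: h2.
    exact: (lanti Ht h1 hat).
  case: (comp Ht hi hj) => hij; first exact: (key i j).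
  by apply: (key j i) => //; rewrite eq_sym.
have ex : exists x : T, True by exists t.
have ynorm : forall s, `|y s| <= 1.
  move=> s; rewrite /y indicE; case: (_ \in _) => /=; by rewrite ?normr1 ?normr0.
have m0 : 0 <= m.
  rewrite /m /mu; apply: lb_le_inf.
    by exists (N (fun s => \1_(Defs.down le t) s + 0)), (fun _ => 0); split => //; apply: C0_zero.
  by move=> _ [g [hg _] <-]; apply: (Nge0 Hn); apply: C0_add => //; apply: C0_indic.
have mz : forall n, m <= N (z n).
  move=> n; rewrite zyp; apply: (mu_lb Ht Hn (Cp n)) => s hs0.
  have hs := supp n s (introN eqP hs0).
  have ts := ltrans Ht (proj1 (tu n)) hs; split => // Ets.
  rewrite -Ets in hs; case: (tu n) => h1 h2; apply: h2; exact: (lanti Ht h1 hs).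
have Nz1 : forall n, N (z n) < m + 1.
  move=> n; apply: (lt_le_trans (Nz n)); rewrite lerD2l invf_le1 ?ltr0n //.
  by rewrite ler1n.
pose B := (m + 1) / cc + 1.
have B0 : 0 <= B by rewrite addr_ge0 // divr_ge0 // ?addr_ge0 // ltW.
have pB : forall n s, `|p n s| <= B.
  move=> n s; rewrite /p; apply: (le_trans (ler_normB _ _)); rewrite /B lerD //.
  apply: (le_trans (supnorm_ge s (Cz n))); rewrite ler_pdivlMr // mulrC.
  have [h1 _] := hcC _ (Cz n); apply: (le_trans h1); exact: ltW.
pose a := N y.
have am : m <= a.
  have := @mu_lb T le R N Ht Hn t (fun _ => 0) (@C0_zero T le R) (fun s h0 => False_ind _ (h0 erefl)).
  suff -> : (fun s => \1_(Defs.down le t) s + 0) = y by [].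
  by apply: funext => s; rewrite addr0.
have ma : a <= m.
  apply/ler_addgt0Pr => e e0.
  pose X := (1 + CC * B) / e.
  have CCB : 0 <= 1 + CC * B by rewrite addr_ge0 // mulr_ge0 // ltW.
  have X0 : 0 <= X by rewrite divr_ge0 // ltW.
  pose K := (Num.Def.archi_bound X).+1.
  pose Kr := K%:R : R.
  have Kr0 : 0 < Kr by rewrite ltr0n.
  have XK : X < Kr.
    apply: (lt_le_trans (archi_boundP X0)); rewrite ler_nat; exact: leqnSn.
  pose w := fun _ : nat => Kr^-1.
  pose idx := index_iota K (K + K).
  have Ey : y = fun s => Qs w z idx s + (-1) * Qs w p idx s.
    apply: funext => s; rewrite /Qs mulN1r -sumrN -big_split /=.
    have -> : \sum_(i <- idx) (w i * z i s - w i * p i s) = \sum_(i <- idx) (Kr^-1 * y s).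
      by apply: eq_bigr => i _; rewrite /w /p; ring.
    rewrite /idx sumr_const_nat addnK -mulr_natr -/Kr.
    by rewrite mulrAC mulVf ?mul1r // gt_eqF.
  have Cavg := C0_Qs w idx Cz.
  have CQp := C0_Qs w idx Cp.
  have h1 : a <= N (Qs w z idx) + N (Qs w p idx).
    rewrite /a Ey; apply: (le_trans (Ntri Hn Cavg (C0_scale (-1) CQp))).
    by rewrite (Nscale Hn _ CQp) normrN normr1 mul1r.
  have h2 : N (Qs w z idx) <= m + Kr^-1.
    apply: (le_trans (N_Qs Hn w idx Cz)).
    apply: (le_trans (y := \sum_(K <= i < K + K) Kr^-1 * (m + Kr^-1))).
      apply: ler_sum_nat => i /andP [hi _]; rewrite /w ger0_norm; last by rewrite invr_ge0 ltW.
      apply: ler_wpM2l; first by rewrite invr_ge0 ltW.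
      apply: ltW; apply: (lt_le_trans (Nz i)).
      rewrite lerD2l lef_pV2 ?posrE ?ltr0n //.
      by rewrite ler_nat; apply: (leq_trans hi).
    rewrite sumr_const_nat addnK -mulr_natr -/Kr.
    by rewrite mulrAC mulVf ?mul1r // gt_eqF.
  have h3 : N (Qs w p idx) <= CC * (Kr^-1 * B).
    have [_ hC] := hcC _ CQp; apply: (le_trans hC); apply: ler_wpM2l; first exact: ltW.
    apply: (supnorm_le ex) => s; apply: (Qs_pt (iota_uniq _ _) disj _ pB _ B0).
      by move=> i; rewrite /w ger0_norm // invr_ge0 ltW.
    by rewrite invr_ge0 ltW.
  have hq : Kr^-1 * (1 + CC * B) <= e.
    rewrite mulrC ler_pdivrMr //; apply: ltW.
    by move: XK; rewrite /X ltr_pdivrMr // [Kr * e]mulrC.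
  have := lerD h2 h3.
  have -> : m + Kr^-1 + CC * (Kr^-1 * B) = m + Kr^-1 * (1 + CC * B) by ring.
  move=> h4; apply: (le_trans h1); apply: (le_trans h4).
  by rewrite lerD2l.
have aeq : a = m by apply/eqP; rewrite eq_le ma am.
have apos : 0 < a.
  have [h1 _] := hcC _ Cy; have := supnorm_ge t Cy.
  rewrite /y indic1 ?normr1; last exact: refl.
  rewrite -/y => hs; rewrite -/a in h1; nra.
have Lphi : forall phi, cont_lin_functional le N phi ->
    exists L, 0 <= L /\ forall idx, uniq idx -> \sum_(i <- idx) `|phi (p i)| <= L.
  move=> phi hphi; have [_ [M hM]] := hphi.
  exists (`|M| * (CC * B)); split; first by rewrite mulr_ge0 // mulr_ge0 // ltW.
  move=> idx hu.
  pose w := fun i => (if 0 <= phi (p i) then 1 else -1) : R.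
  have E : \sum_(i <- idx) `|phi (p i)| = phi (Qs w p idx).
    rewrite (lin_Qs w idx hphi Cp); apply: eq_bigr => i _; rewrite /w.
    case: ifP => hi; first by rewrite mul1r ger0_norm.
    by rewrite mulN1r ltr0_norm // ltNge hi.
  have CQ := C0_Qs w idx Cp.
  have sQ : supnorm (Qs w p idx) <= 1 * B.
    apply: (supnorm_le ex) => s; apply: (Qs_pt hu disj _ pB ler01 B0).
    by move=> i; rewrite /w; case: ifP; rewrite ?normrN normr1.
  rewrite E; apply: (le_trans (ler_norm _)); apply: (le_trans (hM _ CQ)).
  have NQ0 := Nge0 Hn CQ.
  apply: (le_trans (y := `|M| * N (Qs w p idx))).
    by apply: ler_wpM2r => //; apply: ler_norm.
  apply: ler_wpM2l => //; have [_ hC] := hcC _ CQ; apply: (le_trans hC).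
  apply: ler_wpM2l; first exact: ltW.
  by rewrite mul1r in sQ.
have Ll : forall l, Forall (cont_lin_functional le N) l -> exists L, 0 <= L /\
    forall idx, uniq idx -> \sum_(i <- idx) \sum_(phi <- l) `|phi (p i)| <= L.
  elim => [|phi l IH] hl.
    by exists 0; split => // idx _; rewrite big1 // => i _; rewrite big_nil.
  have [L1 [L10 hL1]] := Lphi phi (Forall_inv hl).
  have [L2 [L20 hL2]] := IH (Forall_inv_tail hl).
  exists (L1 + L2); split; first by rewrite addr_ge0.
  move=> idx hu; under eq_bigr do rewrite big_cons.
  by rewrite big_split /=; apply: lerD; [apply: hL1|apply: hL2].
have pick : forall (l : list ((T -> R) -> R)) L (N0 : nat) eta, 0 < eta -> 0 <= L ->
    (forall idx, uniq idx -> \sum_(i <- idx) \sum_(phi <- l) `|phi (p i)| <= L) ->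
    exists n, (N0 <= n)%N /\ \sum_(phi <- l) `|phi (p n)| < eta.
  move=> l L N0 eta eta0 L0 hL; apply: NNPP => hn.
  have H : forall n, (N0 <= n)%N -> eta <= \sum_(phi <- l) `|phi (p n)|.
    by move=> n hn1; rewrite leNgt; apply/negP => hlt; apply: hn; exists n; split.
  pose K := (Num.Def.archi_bound (L / eta)).+1.
  have hK := archi_boundP (divr_ge0 L0 (ltW eta0)).
  have h1 : \sum_(N0 <= i < N0 + K) eta <= \sum_(N0 <= i < N0 + K) \sum_(phi <- l) `|phi (p i)|.
    by apply: ler_sum_nat => i /andP [hi _]; apply: H.
  have h3 := hL (index_iota N0 (N0 + K)) (iota_uniq _ _).
  have h2 : L < eta * K%:R.
    have : L / eta < K%:R by apply: (lt_le_trans hK); rewrite ler_nat leqnSn.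
    by rewrite ltr_pdivrMr // mulrC.
  have := le_trans h1 h3; rewrite sumr_const_nat addKn -mulr_natr => h4.
  by have := lt_le_trans h2 h4; rewrite ltxx.
pose x0 := fun s => a^-1 * y s.
have Cx0 : C0 le x0 := C0_scale _ Cy.
have ia0 : 0 < a^-1 by rewrite invr_gt0.
have Nx0 : N x0 = 1.
  by rewrite /x0 (Nscale Hn _ Cy) gtr0_norm // mulVf // gt_eqF.
have m1 : 0 < m + 1 by lra.
pose del := cc / (m + 1).
have del0 : 0 < del by rewrite divr_gt0.
pose V := [set g : T -> R | N (fun s => g s - x0 s) < del].
have Vopen : norm_open le N V.
  move=> f Cf Vf; exists (del - N (fun s => f s - x0 s)); split.
    by rewrite subr_gt0.
  move=> g Cg hg; rewrite /V /=.
  have -> : (fun s => g s - x0 s) = (fun s => (g s - f s) + (f s - x0 s)).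
    by apply: funext => s; ring.
  apply: (le_lt_trans (Ntri Hn (C0_sub Cg Cf) (C0_sub Cf Cx0))).
  by move: hg; rewrite ltrBrDr addrC.
have [W [HW EW]] : exists W, weak_open le N W /\
    V `&` unit_sphere le N = W `&` unit_sphere le N.
  have := (Hk (V `&` unit_sphere le N)).2; case.
    by exists V; split.
  by move=> W [hW e]; exists W; split.
have Wx0 : W x0.
  have : (V `&` unit_sphere le N) x0.
    split; last by split.
    rewrite /V /=.
    have -> : (fun s => x0 s - x0 s) = (fun _ => 0) by apply: funext => s; rewrite subrr.
    by rewrite (N0 Hn).
  by rewrite EW => -[].
have [l [d [d0 Hl HWl]]] := HW x0 Cx0 Wx0.
have [L [L0 hL]] := Ll l Hl.
pose P := \sum_(phi <- l) `|phi y|.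
have P0 : 0 <= P by apply: sumr_ge0.
pose X := 2 * P / (d * (a * a)).
have X0 : 0 <= X by rewrite divr_ge0 // ?mulr_ge0 // ltW // mulr_gt0.
pose N0 := Num.Def.archi_bound X.
pose eta := d * a / 2.
have eta0 : 0 < eta by rewrite divr_gt0 // mulr_gt0.
have [n [hn hsm]] := pick l L N0 eta eta0 L0 hL.
pose Nn := N (z n).
have Nn_ge : a <= Nn by rewrite aeq; apply: mz.
have Nn_lt : Nn < a + (n.+1%:R)^-1 by rewrite aeq; apply: Nz.
have Nn0 : 0 < Nn by apply: (lt_le_trans apos).
pose gn := fun s => Nn^-1 * z n s.
have Cgn : C0 le gn := C0_scale _ (Cz n).
have Ngn : N gn = 1.
  by rewrite /gn (Nscale Hn _ (Cz n)) gtr0_norm ?invr_gt0 // mulVf // gt_eqF.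
have iNa : Nn^-1 <= a^-1 by rewrite lef_pV2 ?posrE.
have iN0 : 0 < Nn^-1 by rewrite invr_gt0.
set k := (n.+1%:R)^-1 : R.
have k0 : 0 < k by rewrite invr_gt0 ltr0n.
have hXn : X < n.+1%:R.
  apply: (lt_le_trans (archi_boundP X0)); rewrite ler_nat; apply: (leq_trans hn).
  exact: leqnSn.
have F2 : 2 * P * k <= d * (a * a).
  have : 2 * P < n.+1%:R * (d * (a * a)).
    have hda : 0 < d * (a * a) by rewrite !mulr_gt0.
    by move: hXn; rewrite /X ltr_pdivrMr.
  move=> hh2; rewrite /k ler_pdivrMr ?ltr0n //.
  by rewrite [_ * n.+1%:R]mulrC; exact: ltW.
have diff : a^-1 - Nn^-1 = (Nn - a) * (a^-1 * Nn^-1).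
  by field; rewrite !gt_eqF.
have d1 : a^-1 - Nn^-1 <= k * (a^-1 * a^-1).
  rewrite diff; apply: ler_pM.
  - by rewrite subr_ge0.
  - by rewrite mulr_ge0 // ltW.
  - by rewrite lerBlDl ltW.
  - by apply: ler_wpM2l => //; apply: ltW.
have an0 : a != 0 by rewrite gt_eqF.
have aia2 : (a * a) * (a^-1 * a^-1) = 1 by rewrite mulrACA mulfV // mulr1.
have d2 : k * (a^-1 * a^-1) * P <= d / 2.
  have -> : k * (a^-1 * a^-1) * P = (2 * P * k) * (a^-1 * a^-1) / 2 by field.
  apply: (le_trans (y := (d * (a * a)) * (a^-1 * a^-1) / 2)).
    apply: ler_wpM2r; first by rewrite invr_ge0.
    by apply: ler_wpM2r => //; rewrite mulr_ge0 // ltW.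
  by rewrite -(mulrA d) aia2 mulr1.
have d3 : a^-1 * eta = d / 2.
  by rewrite /eta; field; rewrite ?gt_eqF.
have close : forall phi, In phi l -> `|phi gn - phi x0| < d.
  move=> phi hin.
  have hphi : cont_lin_functional le N phi := proj1 (List.Forall_forall _ _) Hl phi hin.
  have e1 : phi gn = Nn^-1 * (phi y + phi (p n)).
    by rewrite /gn (lin_scale _ hphi (Cz n)) zyp (lin_add hphi Cy (Cp n)).
  have e2 : phi x0 = a^-1 * phi y by rewrite /x0 (lin_scale _ hphi Cy).
  have hy : `|phi y| <= P := @in_sum_le _ R (fun f => `|f y|) l phi (fun _ => normr_ge0 _) hin.
  have hp : `|phi (p n)| < eta.
    exact: (le_lt_trans (@in_sum_le _ R (fun f => `|f (p n)|) l phi (fun _ => normr_ge0 _) hin) hsm).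
  rewrite e1 e2.
  have -> : Nn^-1 * (phi y + phi (p n)) - a^-1 * phi y =
            (Nn^-1 - a^-1) * phi y + Nn^-1 * phi (p n) by ring.
  apply: (le_lt_trans (ler_normD _ _)); rewrite !normrM (gtr0_norm iN0) distrC.
  rewrite (ger0_norm (x := a^-1 - Nn^-1)); last by rewrite subr_ge0.
  have A1 : (a^-1 - Nn^-1) * `|phi y| <= k * (a^-1 * a^-1) * P.
    by apply: ler_pM => //; rewrite subr_ge0.
  have A2 : Nn^-1 * `|phi (p n)| < d / 2.
    rewrite -d3; apply: (le_lt_trans (y := a^-1 * `|phi (p n)|)).
      by apply: ler_wpM2r.
    by rewrite ltr_pM2l.
  lra.
have Wgn : (W `&` unit_sphere le N) gn.
  by split; [apply: HWl => // phi hin; apply: close|split].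
move: Wgn; rewrite -EW => -[Vg _]; move: Vg; rewrite /V /=; apply/negP; rewrite -leNgt.
have Cd := C0_sub Cgn Cx0.
have [hlo _] := hcC _ Cd.
apply: (le_trans _ hlo).
have hun : ~ le (u n) t.
  by move=> hu; case: (tu n) => h1 h2; apply: h2; apply: (lanti Ht h1 hu).
have hh : h n (u n) = 0.
  by apply: NNPP => hh; case: (sh n (u n) hh) => _; apply.
have := supnorm_ge (u n) Cd.
rewrite /gn /x0 /z /y hh addr0 indic1 ?indic0 //.
rewrite mulr0 subr0 mulr1 gtr0_norm // => hs.
apply: (le_trans _ (ler_wpM2l (ltW cc0) hs)).
rewrite /del ler_pM2l // lef_pV2 ?posrE //.
by rewrite -aeq; apply: ltW; apply: (lt_le_trans Nn_lt); rewrite lerD2l invf_le1 ?ltr0n // ler1n.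
Qed.
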